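(* In the multivariate LISO setting with $\sum_iY_i=0$ and, for each $k$, distinct values $X^{(k)}_1,\dots,X^{(k)}_n$, let $\pi^{(k)}$ be the permutation with $X^{(k)}_{\pi^{(k)}(1)}<\dots<X^{(k)}_{\pi^{(k)}(n)}$. If $$\lambda\ge\max_{1\le k\le p,\ 1\le m\le n}\Big|\sum_{i=1}^m Y_{\pi^{(k)}(i)}\Big|,$$ then the zero fit $(\theta_1,\dots,\theta_p)=(0,\dots,0)$ is a minimiser of $L_\lambda$, and every single-covariate update of the LISO-backfitting procedure started at zero leaves the fit at zero.
   Context: Data $Y\in\mathbb{R}^n$ with $\sum_iY_i=0$, $X\in\mathbb{R}^{n\times p}$ with columns $X^{(k)}$. $\mathcal{F}_k$ is the set of $\theta_k\in\mathbb{R}^n$ with $\sum_i\theta_{k,i}=0$ and $\theta_{k,i}\le\theta_{k,j}$ whenever $X^{(k)}_i<X^{(k)}_j$. The LISO loss is $L_\lambda(\theta_1,\dots,\theta_p)=\tfrac12\|Y-\sum_k\theta_k\|^2+\lambda\sum_k(\max_i\theta_{k,i}-\min_i\theta_{k,i})$ over $\mathcal{F}_1\times\dots\times\mathcal{F}_p$. A single-covariate backfitting update replaces $\theta_k$ by the minimiser of $L_\lambda$ over $\theta_k\in\mathcal{F}_k$ with the other components fixed. *)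

(* Defs.v *)
(* R is an arbitrary real field (statement is purely order-algebraic). *)
From HB Require Import structures.
From mathcomp Require Import all_boot all_order all_algebra all_fingroup.
Set Implicit Arguments. Unset Strict Implicit. Unset Printing Implicit Defensive.
Import Order.TTheory GRing.Theory Num.Theory.
Local Open Scope ring_scope.

Section LISO.
Variable R : realFieldType.

(* max_i v_i and min_i v_i over 'I_n; the seed of the fold is v's first entry
   (or 0 when n = 0, where the vector is empty), so for n >= 1 these are
   literally the maximum / minimum of the entries. *)
Definition vfirst n (v : 'I_n -> R) : R := nth 0 [seq v i | i <- enum 'I_n] 0.
Definition vmax n (v : 'I_n -> R) : R := \big[Num.max/vfirst v]_(i < n) v i.
Definition vmin n (v : 'I_n -> R) : R := \big[Num.min/vfirst v]_(i < n) v i.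

Definition inFk n (Xk : 'I_n -> R) (t : 'I_n -> R) : Prop :=
  \sum_(i < n) t i = 0 /\ forall i j : 'I_n, Xk i < Xk j -> t i <= t j.

Definition inF n p (X : 'I_p -> 'I_n -> R) (th : 'I_p -> 'I_n -> R) : Prop :=
  forall k : 'I_p, inFk (X k) (th k).

Definition liso_loss n p (lam : R) (Y : 'I_n -> R) (th : 'I_p -> 'I_n -> R) : R :=
  2^-1 * \sum_(i < n) (Y i - \sum_(k < p) th k i) ^+ 2
  + lam * \sum_(k < p) (vmax (th k) - vmin (th k)).

Definition zero_fit n p : 'I_p -> 'I_n -> R := fun _ _ => 0.

Definition upd n p (th : 'I_p -> 'I_n -> R) (k : 'I_p) (t : 'I_n -> R) :
  'I_p -> 'I_n -> R := fun j => if j == k then t else th j.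

End LISO.

(* Main.v *)
Require Import Defs.
From HB Require Import structures.
From mathcomp Require Import all_boot all_order all_algebra all_fingroup.
Import Order.TTheory GRing.Theory Num.Theory.
Local Open Scope ring_scope.

Section Aux.
Variable R : realFieldType.

Lemma big_max_ge (T : eqType) (s : seq T) (F : T -> R) x0 a :
  a \in s -> F a <= \big[Num.max/x0]_(j <- s) F j.
Proof.
elim: s => // b s IH; rewrite inE big_cons le_max => /orP [/eqP -> | /IH ->].
  by rewrite lexx.
by rewrite orbT.
Qed.

Lemma big_min_le (T : eqType) (s : seq T) (F : T -> R) x0 a :
  a \in s -> \big[Num.min/x0]_(j <- s) F j <= F a.
Proof.
elim: s => // b s IH; rewrite inE big_cons ge_min => /orP [/eqP -> | /IH ->].
  by rewrite lexx.
by rewrite orbT.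
Qed.

Lemma vmax_ge n (v : 'I_n -> R) i : v i <= vmax v.
Proof. by rewrite /vmax; apply: big_max_ge; rewrite mem_index_enum. Qed.

Lemma vmin_le n (v : 'I_n -> R) i : vmin v <= v i.
Proof. by rewrite /vmin; apply: big_min_le; rewrite mem_index_enum. Qed.

Lemma vfirst0 n : vfirst (fun _ : 'I_n => (0:R)) = 0.
Proof. by rewrite /vfirst; case: (enum 'I_n). Qed.

Lemma vmax0 n : vmax (fun _ : 'I_n => (0:R)) = 0.
Proof. by rewrite /vmax vfirst0; elim/big_ind: _ => // x y -> ->; rewrite maxxx. Qed.

Lemma vmin0 n : vmin (fun _ : 'I_n => (0:R)) = 0.
Proof. by rewrite /vmin vfirst0; elim/big_ind: _ => // x y -> ->; rewrite minxx. Qed.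

Lemma abel_bound (y u : nat -> R) (lam : R) N :
  (forall m, (1 <= m < N.+1)%N -> `|\sum_(i < m) y i| <= lam) ->
  (forall m, (m < N)%N -> u m <= u m.+1) ->
  \sum_(i < N.+1) y i * u i - (\sum_(i < N.+1) y i) * u N <= lam * (u N - u 0%N).
Proof.
elim: N => [|N IH] hC hu.
  by rewrite !big_ord1 !subrr mulr0.
rewrite big_ord_recr /= [X in _ - X * _]big_ord_recr /=.
set a := \sum_(i < N.+1) y i * u i.
set c := \sum_(i < N.+1) y i.
have e : a + y N.+1 * u N.+1 - (c + y N.+1) * u N.+1
         = (a - c * u N) + - (c * (u N.+1 - u N)).
  by rewrite mulrDl opprD addrACA subrr addr0 mulrBr opprB addrA subrK.
rewrite e.
have h1 : a - c * u N <= lam * (u N - u 0%N).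
  apply: IH => [m /andP [m1 mN]|m mN]; first by apply: hC; rewrite m1 ltnS ltnW.
  by apply: hu; rewrite ltnW.
have hw : 0 <= u N.+1 - u N by rewrite subr_ge0 hu.
have h2 : - (c * (u N.+1 - u N)) <= lam * (u N.+1 - u N).
  rewrite -mulNr ler_wpM2r //; apply: ler_normlW; rewrite normrN.
  by apply: hC; rewrite ltnS leqnn.
apply: le_trans (lerD h1 h2) _.
by rewrite -mulrDr addrC addrA subrK.
Qed.

Lemma percov n (Y : 'I_n -> R) (Xk : 'I_n -> R) (lam : R) (s : 'S_n)
  (t : 'I_n -> R) :
  \sum_(i < n) Y i = 0 ->
  (forall i j : 'I_n, (i < j)%N -> Xk (s i) < Xk (s j)) ->
  (forall m : nat, (1 <= m <= n)%N -> `| \sum_(i < n | (i < m)%N) Y (s i) | <= lam) ->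
  inFk Xk t ->
  \sum_(i < n) Y i * t i <= lam * (vmax t - vmin t).
Proof.
case: n Y Xk s t => [|n'] Y Xk s t hY hs hlam [_ ht].
  by rewrite /vmax /vmin !big_ord0 subrr mulr0.
have lam0 : 0 <= lam by apply: le_trans (normr_ge0 _) (hlam 1%N _).
pose y j := Y (s (inord j)).
pose u j := t (s (inord j)).
have E1 : \sum_(i < n'.+1) Y i * t i = \sum_(i < n'.+1) y i * u i.
  transitivity (\sum_(j < n'.+1) Y (s j) * t (s j)).
    exact: (reindex_inj (@perm_inj _ s)).
  by apply eq_bigr => i _; rewrite /y /u inord_val.
have E2 : \sum_(i < n'.+1) y i = 0.
  transitivity (\sum_(j < n'.+1) Y (s j)); last first.
    have := (reindex_inj (@perm_inj _ s) : \sum_(j < n'.+1) Y j = _).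
    by rewrite hY => <-.
  apply eq_bigr => i _.
  by rewrite /y inord_val.
have hC : forall m, (1 <= m < n'.+1)%N -> `|\sum_(i < m) y i| <= lam.
  move=> m /andP [m1 mn].
  rewrite (big_ord_widen n'.+1 y (ltnW mn)).
  have -> : \sum_(i < n'.+1 | (i < m)%N) y i = \sum_(i < n'.+1 | (i < m)%N) Y (s i).
    by apply eq_bigr => i _; rewrite /y inord_val.
  by apply: hlam; rewrite m1 ltnW.
have hu : forall m, (m < n')%N -> u m <= u m.+1.
  move=> m mn; apply: ht; apply: hs.
  by rewrite !inordK // ltnS // ltnW.
have := @abel_bound y u lam n' hC hu; rewrite -E1 E2 mul0r subr0 => h.
apply: le_trans h _; rewrite ler_wpM2l //; apply: lerB.
  exact: vmax_ge.
exact: vmin_le.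
Qed.

Lemma AC (x y z : R) : x + y - z = y + (- z + x).
Proof. by rewrite [- z + x]addrC addrA [x + y]addrC. Qed.

Lemma Fin (a b c l : R) :
  2^-1 * (a - c *+ 2 + b) + l = 2^-1 * a + 2^-1 * b + (l - c).
Proof.
have h2 : 2^-1 * (c *+ 2) = c.
  by rewrite -[c *+ 2]mulr_natr mulrCA mulVf ?mulr1 // pnatr_eq0.
rewrite !mulrDr mulrN h2 -!addrA; congr (_ + _).
by rewrite addrCA; congr (_ + _); rewrite addrC.
Qed.

Lemma core n p (Y : 'I_n -> R) (X : 'I_p -> 'I_n -> R) (lam : R)
  (pi : 'I_p -> 'S_n)
  (hY : \sum_(i < n) Y i = 0)
  (hpi : forall (k : 'I_p) (i j : 'I_n), (i < j)%N -> X k (pi k i) < X k (pi k j))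
  (hlam : forall (k : 'I_p) (m : nat), (1 <= m <= n)%N ->
            `| \sum_(i < n | (i < m)%N) Y (pi k i) | <= lam)
  (th : 'I_p -> 'I_n -> R) :
  inF X th ->
  liso_loss lam Y (@zero_fit R n p) + 2^-1 * \sum_(i < n) (\sum_(k < p) th k i) ^+ 2
    <= liso_loss lam Y th.
Proof.
move=> hth.
set S := fun i => \sum_(k < p) th k i.
set P := \sum_(k < p) (vmax (th k) - vmin (th k)).
set A := \sum_(i < n) Y i ^+ 2.
set B := \sum_(i < n) S i ^+ 2.
set C := \sum_(i < n) Y i * S i.
have key : C <= lam * P.
  rewrite /C /P mulr_sumr.
  have -> : \sum_(i < n) Y i * S i = \sum_(k < p) \sum_(i < n) Y i * th k i.
    rewrite exchange_big /=; apply eq_bigr => i _; rewrite /S mulr_sumr //.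
  apply: ler_sum => k _.
  exact: percov (hpi k) (hlam k) (hth k).
have L0 : liso_loss lam Y (@zero_fit R n p) = 2^-1 * A.
  rewrite /liso_loss.
  have -> : \sum_(k < p) (vmax (@zero_fit R n p k) - vmin (@zero_fit R n p k)) = 0.
    by apply: big1 => k _; rewrite /zero_fit vmax0 vmin0 subrr.
  rewrite mulr0 addr0 /A; congr (_ * _); apply eq_bigr => i _.
  by rewrite big1 // subr0.
have L1 : liso_loss lam Y th = 2^-1 * (A - C *+ 2 + B) + lam * P.
  rewrite /liso_loss -/P; congr (_ * _ + _).
  rewrite /A /B /C -sumrMnl -sumrB -big_split /=; apply eq_bigr => i _.
  by rewrite sqrrB.
rewrite L0 L1 Fin.
by rewrite lerDl subr_ge0.
Qed.

End Aux.

From Stdlib Require Import FunctionalExtensionality.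

Theorem mainTheorem8 (R : realFieldType) (n p : nat)
  (Y : 'I_n -> R) (X : 'I_p -> 'I_n -> R) (lam : R)
  (pi : 'I_p -> 'S_n)
  (hY : \sum_(i < n) Y i = 0)
  (hX : forall k : 'I_p, injective (X k))
  (hpi : forall (k : 'I_p) (i j : 'I_n), (i < j)%N -> X k (pi k i) < X k (pi k j))
  (hlam : forall (k : 'I_p) (m : nat), (1 <= m <= n)%N ->
            `| \sum_(i < n | (i < m)%N) Y (pi k i) | <= lam) :
  (forall th : 'I_p -> 'I_n -> R, inF X th ->
     liso_loss lam Y (@zero_fit R n p) <= liso_loss lam Y th)
  /\
  (forall k : 'I_p,
     (forall t : 'I_n -> R, inFk (X k) t ->
        liso_loss lam Y (upd (@zero_fit R n p) k (fun _ => 0))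
          <= liso_loss lam Y (upd (@zero_fit R n p) k t))
     /\
     (forall t : 'I_n -> R, inFk (X k) t ->
        (forall t' : 'I_n -> R, inFk (X k) t' ->
           liso_loss lam Y (upd (@zero_fit R n p) k t)
             <= liso_loss lam Y (upd (@zero_fit R n p) k t')) ->
        t = (fun _ => 0))).
Proof.
have Bge0 : forall th : 'I_p -> 'I_n -> R,
    0 <= 2^-1 * \sum_(i < n) (\sum_(k < p) th k i) ^+ 2.
  move=> th; apply: mulr_ge0; first by rewrite invr_ge0 ler0n.
  by apply: sumr_ge0 => i _; apply: sqr_ge0.
have P1 : forall th : 'I_p -> 'I_n -> R, inF X th ->
     liso_loss lam Y (@zero_fit R n p) <= liso_loss lam Y th.
  move=> th hth; apply: le_trans (@core R n p Y X lam pi hY hpi hlam th hth).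
  by rewrite lerDl.
split=> // k.
set Z := @zero_fit R n p.
have inU : forall t, inFk (X k) t -> inF X (upd Z k t).
  move=> t ht j; rewrite /upd; case: eqP => [-> //|_].
  rewrite /Z /zero_fit; split; [by rewrite big1 | move=> *; exact: lexx].
have U0 : upd Z k (fun _ => 0) = Z.
  apply: functional_extensionality => j; rewrite /upd /Z /zero_fit.
  by case: eqP.
have Usum : forall t i, \sum_(j < p) upd Z k t j i = t i.
  move=> t i; rewrite (bigD1 k) //= /upd eqxx big1 ?addr0 //.
  by move=> j /negbTE ->.
split.
  by move=> t ht; rewrite U0; apply: P1; apply: inU.
move=> t ht hmin.
have h0 : inFk (X k) (fun _ : 'I_n => (0 : R)).
  by split; [rewrite big1 | move=> *; exact: lexx].
have h1 := hmin _ h0; rewrite U0 in h1.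
have h2 := @core R n p Y X lam pi hY hpi hlam _ (inU t ht).
have h3 := le_trans h2 h1.
rewrite -[X in _ <= X]addr0 lerD2l in h3.
have h4 : \sum_(i < n) (\sum_(j < p) upd Z k t j i) ^+ 2 = 0.
  apply: le_anti; rewrite sumr_ge0 ?andbT; last by move=> i _; apply: sqr_ge0.
  by rewrite -(pmulr_rle0 _ (x := 2^-1)) // invr_gt0 ltr0n.
apply: functional_extensionality => i.
move/eqP: h4; rewrite psumr_eq0; last by move=> j _; apply: sqr_ge0.
move/allP/(_ i (mem_index_enum _)); rewrite /= Usum sqrf_eq0.
by move/eqP.
Qed.
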